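(* Let $M=(V,\delta)$ be an $n$-point metric in which all pairwise distances are distinct, and let $r:V\to\mathbb{R}^+$ be a range assignment. Let $F$ be the minimum spanning forest of $S=SDG(M,r)$ and let $H$ be a minimum-weight Hamiltonian path of $M$. Then $w(F)\le \log_{5/4} n \cdot w(H)$.
   Context: A metric $M=(V,\delta)$ is viewed as the complete weighted graph on $V$ with edge weights $\delta(u,v)$. A range assignment is a map $r:V\to\mathbb{R}^+$. The symmetric disk graph $SDG(M,r)$ is the undirected spanning subgraph of this complete graph containing the edge $(u,v)$ (with weight $\delta(u,v)$) if and only if $r(u)\ge\delta(u,v)$ and $r(v)\ge\delta(u,v)$. The minimum spanning forest of a weighted graph is a spanning forest with the same connected components and minimum total weight. The weight of a graph is the sum of its edge weights. *)

(* Defs.v *)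
From Stdlib Require Import Reals.
From mathcomp Require Import all_boot.
Set Implicit Arguments. Unset Strict Implicit. Unset Printing Implicit Defensive.

Definition Rleb (x y : R) : bool := if Rle_dec x y then true else false.

Section Defs.
Variable V : finType.

Definition is_metric (delta : V -> V -> R) : Prop :=
  (forall u v, Rle 0 (delta u v)) /\
  (forall u v, delta u v = R0 <-> u = v) /\
  (forall u v, delta u v = delta v u) /\
  (forall u v w, Rle (delta u w) (Rplus (delta u v) (delta v w))).

Definition distinct_distances (delta : V -> V -> R) : Prop :=
  forall u v x y, u != v -> x != y -> delta u v = delta x y ->
    [set u; v] = [set x; y].

(* graphs on V are given by their edge sets: sets of 2-element vertex sets *)
Definition edge_rel (E : {set {set V}}) : rel V :=
  fun u v => (u != v) && ([set u; v] \in E).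

(* weight of an edge set: sum of delta over its edges, each edge {u,v}
   counted once via the ordered pair with enum_rank u < enum_rank v *)
Definition weight (delta : V -> V -> R) (E : {set {set V}}) : R :=
  foldr Rplus R0
    [seq delta p.1 p.2 | p <- enum [pred p : V * V |
        (enum_rank p.1 < enum_rank p.2)%N && ([set p.1; p.2] \in E)]].

Definition SDG (delta : V -> V -> R) (r : V -> R) : {set {set V}} :=
  [set e : {set V} | [exists u, exists v,
     [&& u != v, e == [set u; v], Rleb (delta u v) (r u) & Rleb (delta u v) (r v)]]].

Definition acyclic (F : {set {set V}}) : Prop :=
  forall c : seq V, (3 <= size c)%N -> ~ ucycle (edge_rel F) c.

Definition spanning_forest (F E : {set {set V}}) : Prop :=
  F \subset E /\ acyclic F /\
  (forall u v, connect (edge_rel F) u v = connect (edge_rel E) u v).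

Definition min_spanning_forest (delta : V -> V -> R) (F E : {set {set V}}) : Prop :=
  spanning_forest F E /\
  (forall F', spanning_forest F' E -> Rle (weight delta F) (weight delta F')).

Definition hamiltonian_path (s : seq V) : Prop := perm_eq s (enum V).

Definition path_weight (delta : V -> V -> R) (s : seq V) : R :=
  match s with
  | [::] => R0
  | x :: t => foldr Rplus R0 (pairmap delta x t)
  end.

Definition min_hamiltonian_path (delta : V -> V -> R) (s : seq V) : Prop :=
  hamiltonian_path s /\
  (forall s', hamiltonian_path s' -> Rle (path_weight delta s) (path_weight delta s')).

End Defs.

(* Main.v *)
Require Import Defs.
From Stdlib Require Import Reals Lra Psatz.
From mathcomp Require Import all_boot.
Set Implicit Arguments. Unset Strict Implicit. Unset Printing Implicit Defensive.


Lemma sum_split (T : eqType) (s : seq T) (Q Q' : pred T) (x : T) (g : T -> R) :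
  uniq s -> x \in s -> (forall y, Q y = Q' y || (y == x)) -> ~~ Q' x ->
  foldr Rplus R0 [seq g y | y <- s & Q y] =
  Rplus (g x) (foldr Rplus R0 [seq g y | y <- s & Q' y]).
Proof.
move=> + + hQ hQ'.
elim: s => // y s IH /= /andP[ys us]; rewrite inE => /orP[/eqP xy|xs].
  subst y. rewrite hQ eqxx orbT (negbTE hQ') /=. congr Rplus.
  congr foldr; congr map; apply: eq_in_filter => z zs.
  rewrite hQ; case: eqP => [zx|]; last by rewrite orbF.
  by subst z; rewrite zs in ys.
have yx : y != x by apply/eqP => yx; subst y; rewrite xs in ys.
rewrite hQ (negbTE yx) orbF.
case: (Q' y) => /=; rewrite IH //; lra.
Qed.

Lemma set2_eq (V : finType) (a b y1 y2 : V) : a != b -> [set y1; y2] = [set a; b] ->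
  (y1 = a /\ y2 = b) \/ (y1 = b /\ y2 = a).
Proof.
move=> ab E.
have ha : a \in [set y1; y2] by rewrite E !inE eqxx.
have hb : b \in [set y1; y2] by rewrite E !inE eqxx orbT.
have h1 : y1 \in [set a; b] by rewrite -E !inE eqxx.
have h2 : y2 \in [set a; b] by rewrite -E !inE eqxx orbT.
move: ha hb h1 h2; rewrite !inE.
case/orP=> /eqP ?; case/orP=> /eqP ?; subst; rewrite ?eqxx in ab => //; tauto.
Qed.

Section W.
Variable V : finType.
Variable delta : V -> V -> R.
Hypothesis dsym : forall u v, delta u v = delta v u.

Lemma weightD1 (E : {set {set V}}) a b : a != b -> [set a; b] \in E ->
  weight delta E = Rplus (delta a b) (weight delta (E :\ [set a; b])).
Proof.
move=> ab abE.
pose pe := if (enum_rank a < enum_rank b)%N then (a, b) else (b, a).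
have rab : enum_rank a != enum_rank b.
  by apply: contra ab => /eqP /enum_rank_inj ->.
rewrite /weight /enum_mem.
have -> : delta a b = (fun p : V * V => delta p.1 p.2) pe.
  by rewrite /pe; case: ifP => _ //=.
apply: sum_split.
- by rewrite -enumT enum_uniq.
- by rewrite -enumT mem_enum.
- move=> [y1 y2] /=; rewrite !inE.
  case: (boolP ([set y1; y2] == [set a; b])) => [/eqP Ey|ne] /=.
    have := set2_eq ab Ey; rewrite /pe.
    case=> [[-> ->]|[-> ->]]; rewrite ?(setUC [set b]) abE andbF /=;
     case: ltngtP (rab) => //= h _; rewrite ?xpair_eqE ?eqxx ?(negbTE ab) ?andbF //.
    by move: rab; rewrite -val_eqE /= h eqxx.
  have -> : ((y1, y2) == pe) = false.
    apply/negbTE; apply: contra ne; rewrite /pe; case: ifP => _ /eqP [-> ->] //.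
    by rewrite setUC.
  by rewrite orbF.
- by rewrite /pe; case: ifP => /= _; rewrite !inE /= ?eqxx ?andbF /= // setUC eqxx andbF.
Qed.

End W.
Section G.
Variable V : finType.
Implicit Types E F G : {set {set V}}.

Lemma er_sym E : symmetric (edge_rel E).
Proof. by move=> u v; rewrite /edge_rel eq_sym setUC. Qed.

Lemma csym E u v : connect (edge_rel E) u v = connect (edge_rel E) v u.
Proof. exact: (sym_connect_sym (@er_sym E)). Qed.

Lemma er_mono E1 E2 : E1 \subset E2 -> subrel (edge_rel E1) (edge_rel E2).
Proof.
move=> sub u v /andP[uv h]; apply/andP; split => //; exact: (subsetP sub).
Qed.

Lemma cmono E1 E2 u v : E1 \subset E2 -> connect (edge_rel E1) u v ->
  connect (edge_rel E2) u v.
Proof.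
move=> sub; apply: connect_sub => x y h; apply: connect1; exact: er_mono h.
Qed.

Lemma acyclic_sub E1 E2 : E1 \subset E2 -> acyclic E2 -> acyclic E1.
Proof.
move=> sub ac c sz /andP[cy un]; apply: (ac c sz); apply/andP; split => //.
exact: (sub_cycle (er_mono sub)).
Qed.

Lemma er_edge E u v : u != v -> [set u; v] \in E -> edge_rel E u v.
Proof. by move=> *; apply/andP. Qed.

Lemma acyc_sep F a b : acyclic F -> a != b -> [set a; b] \in F ->
  ~~ connect (edge_rel (F :\ [set a; b])) a b.
Proof.
move=> acF ab abF; apply/negP => /connectP [s pth lst].
move: lst; case/shortenP: pth => p' pth' up _ lst.
apply: (acF (a :: p')); last first.
  apply/andP; split => //=; rewrite rcons_path.
  apply/andP; split; first by apply: sub_path pth'; apply: er_mono; apply: subD1set.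
  by rewrite -lst; apply: er_edge; [rewrite eq_sym | rewrite setUC].
case: p' pth' up lst => [|y [|z p2]] //=.
  by move=> _ _ ba; rewrite ba eqxx in ab.
move=> /andP[/andP[_ h] _] _ yb; subst y.
by rewrite !inE eqxx in h.
Qed.

Lemma conn_split G a b u w : a != b ->
  connect (edge_rel G) u w ->
  let c := connect (edge_rel (G :\ [set a; b])) in
  c u w \/ (c u a /\ c b w) \/ (c u b /\ c a w).
Proof.
move=> ab /connectP[s pth ->] c.
have ctr : forall x y z, c x y -> c y z -> c x z by move=> x y z; apply: connect_trans.
have cs : forall x y, c x y -> c y x by move=> x y; rewrite /c csym.
have c0 : forall x, c x x by move=> x; apply: connect0.
have step : forall x y, edge_rel G x y ->
    (c u x \/ (c u a /\ c b x) \/ (c u b /\ c a x)) ->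
    (c u y \/ (c u a /\ c b y) \/ (c u b /\ c a y)).
  move=> x y /andP[xy xyG].
  case: (boolP ([set x; y] == [set a; b])) => [/eqP exy | ne].
    case: (set2_eq ab exy) => [[-> ->]|[-> ->]].
      case=> [h|[[h1 h2]|[h1 h2]]].
      - by right; left; split.
      - by left; apply: ctr h1 (cs _ _ h2).
      - by left.
    case=> [h|[[h1 h2]|[h1 h2]]].
    - by right; right; split.
    - by left.
    - by left; apply: ctr h1 (cs _ _ h2).
  have cxy : c x y.
    by apply: connect1; apply: er_edge => //; rewrite !inE ne.
  case=> [h|[[h1 h2]|[h1 h2]]].
  - by left; apply: ctr h cxy.
  - by right; left; split => //; apply: ctr h2 cxy.
  - by right; right; split => //; apply: ctr h2 cxy.
have gen : forall s' x, path (edge_rel G) x s' ->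
    (c u x \/ (c u a /\ c b x) \/ (c u b /\ c a x)) ->
    (c u (last x s') \/ (c u a /\ c b (last x s')) \/ (c u b /\ c a (last x s'))).
  elim=> [|y s' IH] x //= /andP[exy p] h; exact: IH p (step _ _ exy h).
by apply: gen pth _; left; apply: c0.
Qed.


Lemma acyc_add G p q : acyclic G -> p != q -> ~~ connect (edge_rel G) p q ->
  acyclic (G :|: [set [set p; q]]).
Proof.
move=> acG pq npq c sz /andP[cy uc].
set G' := G :|: [set [set p; q]].
have stepE : forall u v, edge_rel G' u v ->
    edge_rel G u v \/ (u = p /\ v = q) \/ (u = q /\ v = p).
  move=> u v /andP[uv]; rewrite !inE => /orP[h|/eqP h]; first by left; apply/andP.
  right; exact: set2_eq pq h.
have subp : {in predC1 p &, subrel (edge_rel G') (edge_rel G)}.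
  move=> u v; rewrite !inE => up vp /stepE [//|[[? ?]|[? ?]]]; subst.
    by move: up; rewrite eqxx.
  by move: vp; rewrite eqxx.
have subq : {in predC1 q &, subrel (edge_rel G') (edge_rel G)}.
  move=> u v; rewrite !inE => up vp /stepE [//|[[? ?]|[? ?]]]; subst.
    by move: vp; rewrite eqxx.
  by move: up; rewrite eqxx.
case: (boolP (p \in c)) => pc; last first.
  apply: (acG c sz); apply/andP; split => //; apply: (sub_in_cycle subp) cy.
  by apply/allP => x xc; rewrite !inE; apply: contra pc => /eqP <-.
case: (boolP (q \in c)) => qc; last first.
  apply: (acG c sz); apply/andP; split => //; apply: (sub_in_cycle subq) cy.
  by apply/allP => x xc; rewrite !inE; apply: contra qc => /eqP <-.
case/rot_to: pc => i s rc.
have cy' : cycle (edge_rel G') (p :: s) by rewrite -rc rot_cycle.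
have uc' : uniq (p :: s) by rewrite -rc rot_uniq.
have sz' : (3 <= size (p::s))%N by rewrite -rc size_rot.
have qs : q \in s.
  have : q \in rot i c by rewrite mem_rot.
  by rewrite rc inE eq_sym (negbTE pq).
apply/negP: npq; apply/negPn.
move: cy' sz' uc' qs; rewrite /= rcons_path.
clear rc; case: s => [|y s'] //= /andP[/andP[epy ps'] elast] sz' /andP[pys /andP[ys' us']] qys.
have allp : all (predC1 p) (y :: s').
  by apply/allP => x xs; rewrite !inE; apply: contraNneq pys => xp; rewrite -xp.
case: (eqVneq y q) => [yq|yq].
  subst y.
  move: ps' elast sz' pys ys' us' qys allp; case: s' => [|z s''] //.
  move=> ps' elast _ pys ys' us' _ allp.
  have pq' : path (edge_rel G) q (z :: s'') by apply: (sub_in_path subp) allp ps'.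
  have lq : last q (z :: s'') != q.
    by rewrite /=; apply: contraNneq ys' => <-; exact: mem_last.
  have lp : last q (z :: s'') != p.
    have hm : last q (z :: s'') \in q :: z :: s'' by rewrite /= inE mem_last orbT.
    by move/allP: allp => /(_ _ hm); rewrite !inE.
  have el : edge_rel G (last q (z :: s'')) p.
    case: (stepE _ _ elast) => [//|[[h _]|[h _]]].
      by rewrite h eqxx in lp.
    by rewrite h eqxx in lq.
  rewrite csym.
  apply: (@path_connect _ _ q (rcons (z :: s'') p)); first by rewrite rcons_path pq' el.
  by rewrite inE mem_rcons inE eqxx orbT.
have epy' : edge_rel G p y.
  case: (stepE _ _ epy) => [//|[[_ h]|[h _]]].
    by rewrite h eqxx in yq.
  by rewrite h eqxx in pq.
have py : path (edge_rel G) y s' by apply: (sub_in_path subp) allp ps'.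
apply: (@path_connect _ _ p (y :: s')); first by rewrite /= epy' py.
by rewrite inE qys orbT.
Qed.

Definition two_sets F := forall e, e \in F -> exists a b, a != b /\ e = [set a; b].

Lemma setD_split F (S : {set {set V}}) e : e \in S -> F :\: S = (F :\: (S :\ e)) :\ e.
Proof.
move=> eS; apply/setP => x; rewrite !inE.
by case: (eqVneq x e) => [->|] //=; rewrite eS.
Qed.

Lemma sep_edge F u w : acyclic F -> two_sets F -> forall S : {set {set V}}, S \subset F ->
  connect (edge_rel F) u w -> ~~ connect (edge_rel (F :\: S)) u w ->
  exists2 e, e \in S & ~~ connect (edge_rel (F :\ e)) u w.
Proof.
move=> acF F2 S; move: {2}#|S| (erefl #|S|) => n.
elim: n S => [|n IH] S cS sub cuw ncS.
  by move/cards0_eq: cS => S0; rewrite S0 setD0 cuw in ncS.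
case: (set_0Vmem S) => [S0|[e eS]]; first by rewrite S0 cards0 in cS.
have cS' : #|S :\ e| = n by move: cS; rewrite (cardsD1 e) eS add1n => [[]].
have sub' : S :\ e \subset F by apply: subset_trans sub; apply: subD1set.
case: (boolP (connect (edge_rel (F :\: (S :\ e))) u w)) => h; last first.
  case: (IH _ cS' sub' cuw h) => e' e'S ne'; exists e' => //.
  by move: e'S; rewrite !inE => /andP[].
have [a [b [ab ee]]] := F2 e (subsetP sub e eS).
subst e.
case: (conn_split ab h) => [h1|[[h1 h2]|[h1 h2]]].
- by rewrite (setD_split F eS) h1 in ncS.
- exists [set a; b] => //; apply/negP => cF.
  have m : (F :\: (S :\ [set a; b])) :\ [set a; b] \subset F :\ [set a; b].
    by apply/subsetP => x; rewrite !inE => /and3P[-> _ ->].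
  have : connect (edge_rel (F :\ [set a; b])) a b.
    apply: connect_trans (connect_trans _ cF) _.
      by rewrite csym; apply: cmono m h1.
    by rewrite csym; apply: cmono m h2.
  by apply/negP; apply: acyc_sep => //; apply: (subsetP sub).
- exists [set a; b] => //; apply/negP => cF.
  have m : (F :\: (S :\ [set a; b])) :\ [set a; b] \subset F :\ [set a; b].
    by apply/subsetP => x; rewrite !inE => /and3P[-> _ ->].
  have : connect (edge_rel (F :\ [set a; b])) b a.
    apply: connect_trans (connect_trans _ cF) _.
      by rewrite csym; apply: cmono m h1.
    by rewrite csym; apply: cmono m h2.
  rewrite csym; apply/negP; apply: acyc_sep => //; apply: (subsetP sub). done.
Qed.

Lemma add_pt (c c' : rel V) (P' : {set V}) x :
  (forall u v, c u v -> c v u) -> (forall u v, c u v -> c' u v) ->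
  (forall p q, p \in P' -> q \in P' -> p != q -> ~~ c' p q) ->
  (forall p, p \in P' -> ~~ c x p) ->
  forall y z, y \in x |: P' -> z \in x |: P' -> y != z -> ~~ c y z.
Proof.
move=> cs cc' hP hx y z; rewrite !inE => /orP[/eqP->|yP] /orP[/eqP->|zP] yz.
- by rewrite eqxx in yz.
- exact: hx.
- by apply/negP => /cs; apply/negP; apply: hx.
- by apply/negP => /cc'; apply/negP; apply: hP.
Qed.

Lemma pts F (S : {set {set V}}) : acyclic F -> two_sets F -> S \subset F -> S != set0 ->
  exists P : {set V}, [/\ #|P| = #|S|.+1,
    (forall x, x \in P -> exists2 e, e \in S & x \in e) &
    (forall x y, x \in P -> y \in P -> x != y ->
       ~~ connect (edge_rel (F :\: S)) x y)].
Proof.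
move=> acF F2; move: {2}#|S| (erefl #|S|) => n.
elim: n S => [|n IH] S cS sub S0.
  by move/cards0_eq: cS => S0'; rewrite S0' eqxx in S0.
case: (set_0Vmem S) => [S0'|[e eS]]; first by rewrite S0' eqxx in S0.
have cS' : #|S :\ e| = n by move: cS; rewrite (cardsD1 e) eS add1n => [[]].
have sub' : S :\ e \subset F by apply: subset_trans sub; apply: subD1set.
have [a [b [ab ee]]] := F2 e (subsetP sub e eS).
subst e.
have abF : [set a; b] \in F by apply: (subsetP sub).
have sepab : ~~ connect (edge_rel (F :\: S)) a b.
  apply/negP => h; move/negP: (acyc_sep acF ab abF); apply.
  have sb : F :\: S \subset F :\ [set a; b].
    apply/subsetP => x; rewrite !inE => /andP[h1 ->].
    by rewrite andbT; apply: contraNneq h1 => ->.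
  exact: cmono sb h.
have cs : forall u v, connect (edge_rel (F :\: S)) u v -> connect (edge_rel (F :\: S)) v u.
  by move=> u v; rewrite csym.
case: (boolP (S :\ [set a; b] == set0)) => [/eqP E0|ne0].
  exists [set a; b]; split.
  - by rewrite cards2 ab cS -cS' E0 cards0.
  - by move=> x xab; exists [set a; b].
  - move=> x y; rewrite !inE => /orP[/eqP->|/eqP->] /orP[/eqP->|/eqP->];
      rewrite ?eqxx // => _.
    by apply/negP => /cs; apply/negP.
have [P' [cP' ptP' sepP']] := IH _ cS' sub' ne0.
have mono : forall u v, connect (edge_rel (F :\: S)) u v ->
    connect (edge_rel (F :\: (S :\ [set a; b]))) u v.
  move=> u v; apply: cmono; apply/subsetP => x; rewrite !inE.
  by case/andP=> h1 h2; rewrite h2 andbT; apply: contra h1 => /andP[].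
have ptS : forall x, x \in P' -> exists2 e, e \in S & x \in e.
  by move=> x /ptP' [e]; rewrite !inE => /andP[_ eS'] xe; exists e.
case: (boolP [exists p in P', connect (edge_rel (F :\: S)) a p]).
  case/existsP=> p /andP[pP cap].
  have hb : forall q, q \in P' -> ~~ connect (edge_rel (F :\: S)) b q.
    move=> q qP; apply/negP => cbq.
    case: (eqVneq p q) => [pq|pq].
      subst q; by move/negP: sepab; apply; apply: connect_trans cap (cs _ _ cbq).
    move/negP: (sepP' p q pP qP pq); apply.
    apply: connect_trans (mono _ _ (cs _ _ cap)) _.
    apply: connect_trans (mono _ _ cbq).
    apply: connect1; apply/andP; split => //.
    by rewrite !inE eqxx abF.
  have bP : b \notin P'.
    by apply/negP => bP; move/negP: (hb b bP); apply; apply: connect0.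
  exists (b |: P'); split.
  - by rewrite cardsU1 bP cP' cS' cS.
  - move=> x; rewrite !inE => /orP[/eqP->|/ptS //].
    by exists [set a; b] => //; rewrite !inE eqxx orbT.
  - exact: (add_pt cs mono sepP' hb).
move=> nex.
have ha : forall p, p \in P' -> ~~ connect (edge_rel (F :\: S)) a p.
  move=> p pP; apply/negP => h; move/negP: nex; apply; apply/existsP; exists p.
  by rewrite pP h.
have aP : a \notin P'.
  by apply/negP => aP; move/negP: (ha a aP); apply; apply: connect0.
exists (a |: P'); split.
- by rewrite cardsU1 aP cP' cS' cS.
- move=> x; rewrite !inE => /orP[/eqP->|/ptS //].
  by exists [set a; b] => //; rewrite !inE eqxx.
- exact: (add_pt cs mono sepP' ha).
Qed.

End G.

Section PW.
Variable V : finType.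
Variable delta : V -> V -> R.
Hypothesis dpos : forall u v, Rle 0 (delta u v).
Hypothesis dtri : forall u v w, Rle (delta u w) (Rplus (delta u v) (delta v w)).

Definition pw x s := foldr Rplus R0 (pairmap delta x s).

Lemma pw_tri x y s : Rle (pw x s) (Rplus (delta x y) (pw y s)).
Proof.
case: s => [|z s] /=; first by have := dpos x y; rewrite /pw /=; lra.
rewrite /pw /=; have := dtri x y z; lra.
Qed.

Lemma pw_filter (P : pred V) s y : Rle (pw y (filter P s)) (pw y s).
Proof.
elim: s y => [|z s IH] y /=; first by apply: Rle_refl.
case: (P z) => /=.
  by rewrite /pw /=; have := IH z; rewrite /pw; lra.
apply: Rle_trans (IH y) _; rewrite {2}/pw /=.
by have := pw_tri y z s; rewrite /pw; lra.
Qed.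

Lemma pw_filter2 (P : pred V) s x : Rle (path_weight delta (filter P s)) (pw x s).
Proof.
elim: s x => [|z s IH] x /=; first by apply: Rle_refl.
case: (P z) => /=.
  apply: Rle_trans (pw_filter P s z) _; rewrite [X in Rle _ X]/pw /=.
  by have := dpos x z; rewrite /pw; lra.
apply: Rle_trans (IH z) _; rewrite [X in Rle _ X]/pw /=.
by have := dpos x z; rewrite /pw; lra.
Qed.

Lemma path_weight_filter (P : pred V) s :
  Rle (path_weight delta (filter P s)) (path_weight delta s).
Proof.
case: s => [|x s] /=; first by apply: Rle_refl.
case: (P x) => /=; first exact: pw_filter.
exact: pw_filter2.
Qed.

Lemma pw_lower t x s : uniq (x :: s) ->
  (forall u v, u \in x :: s -> v \in x :: s -> u != v -> Rle t (delta u v)) ->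
  Rle (Rmult (INR (size s)) t) (pw x s).
Proof.
elim: s x => [|y s IH] x /=; first by rewrite /pw /=; lra.
move=> /andP[xys uys] h.
have h1 : Rle t (delta x y).
  apply: h; rewrite ?inE ?eqxx ?orbT //.
  by apply: contraNneq xys => ->; rewrite inE eqxx.
have h2 := IH y uys (fun u v hu hv => h u v (introT orP (or_intror hu)) (introT orP (or_intror hv))).
rewrite /pw /= in h2 *; move: h2; case: (size s) => [|k] /=; lra.
Qed.

Lemma ham_lower (H : seq V) (P : {set V}) t :
  perm_eq H (enum V) ->
  (forall u v, u \in P -> v \in P -> u != v -> Rle t (delta u v)) ->
  Rle (Rmult (INR (#|P|.-1)) t) (path_weight delta H).
Proof.
move=> pH hP.
apply: Rle_trans (path_weight_filter (mem P) H).
have sz : size (filter (mem P) H) = #|P|.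
  by rewrite size_filter (permP pH) enumT cardE /enum_mem size_filter.
have un : uniq (filter (mem P) H) by apply: filter_uniq; rewrite (perm_uniq pH) enum_uniq.
have mf : forall u, u \in filter (mem P) H -> u \in P.
  by move=> u; rewrite mem_filter => /andP[].
move: sz un mf.
case: (filter (mem P) H) => [|x s] /=.
  by move=> <- _ _; rewrite /=; lra.
move=> <- un mf /=.
by apply: pw_lower => // u v hu hv; apply: hP; apply: mf.
Qed.
End PW.


Lemma RlebP x y : Rleb x y = true <-> Rle x y.
Proof. by rewrite /Rleb; case: Rle_dec => h; split. Qed.

Section M.
Variable V : finType.
Variable delta : V -> V -> R.
Variable r : V -> R.
Variable F : {set {set V}}.
Hypothesis dsym : forall u v, delta u v = delta v u.
Hypothesis msf : min_spanning_forest delta F (SDG delta r).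

Lemma sdgP e : e \in SDG delta r -> exists u v, [/\ u != v, e = [set u; v],
  Rle (delta u v) (r u) & Rle (delta u v) (r v)].
Proof.
rewrite inE => /existsP [u /existsP [v /and4P[uv /eqP-> h1 h2]]].
by exists u, v; split => //; apply/RlebP.
Qed.

Lemma sdg_in u v : u != v -> Rle (delta u v) (r u) -> Rle (delta u v) (r v) ->
  [set u; v] \in SDG delta r.
Proof.
move=> uv h1 h2; rewrite inE; apply/existsP; exists u; apply/existsP; exists v.
by rewrite uv eqxx /=; apply/andP; split; apply/RlebP.
Qed.

Lemma weight0 : weight delta set0 = R0.
Proof.
rewrite /weight /enum_mem; elim: (Finite.enum _) => //= x s IH.
by rewrite inE /= in_set0 andbF.
Qed.

Lemma weight1 a b : a != b -> weight delta [set [set a; b]] = delta a b.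
Proof.
move=> ab; rewrite (weightD1 dsym ab (set11 _)).
have -> : [set [set a; b]] :\ [set a; b] = set0.
  by apply/setP => x; rewrite !inE; case: eqP.
by rewrite weight0 Rplus_0_r.
Qed.

Lemma exch a b p q : a != b -> [set a; b] \in F -> p != q ->
  [set p; q] \in SDG delta r ->
  connect (edge_rel F) p q -> ~~ connect (edge_rel (F :\ [set a; b])) p q ->
  Rle (delta a b) (delta p q).
Proof.
move=> ab abF pq pqS cpq ncpq.
case: msf => [[subF [acF span]] minF].
destruct (Rle_dec (delta a b) (delta p q)) as [h|h]; first done.
apply Rnot_le_lt in h.
set e := [set a; b].
set F' := (F :\ e) :|: [set [set p; q]].
have pqF : [set p; q] \notin F.
  apply/negP => pqF; case: (eqVneq [set p; q] e) => [E|ne].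
    case: (set2_eq ab E) => [[? ?]|[? ?]]; subst; first lra.
    by rewrite dsym in h; lra.
  move/negP: ncpq; apply; apply: connect1; apply/andP; split => //.
  by rewrite !inE ne pqF.
have F'S : F' \subset SDG delta r.
  apply/subsetP => x; rewrite in_setU in_setD1 in_set1 => /orP[/andP[_ xF]|/eqP->] //.
  exact: (subsetP subF x xF).
have m : F :\ e \subset F' by apply: subsetUl.
have sp : spanning_forest F' (SDG delta r).
  split; [done|split].
  - apply: acyc_add => //; apply: acyclic_sub acF; exact: subD1set.
  - move=> u v; apply/idP/idP => h'.
      exact: cmono F'S h'.
    rewrite -span in h'; apply: connect_sub h' => x y /andP[xy xyF].
    case: (eqVneq [set x; y] e) => [E|ne].
      have epq : connect (edge_rel F') p q.
        by apply: connect1; apply: er_edge => //; rewrite !inE eqxx orbT.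
      have cab : connect (edge_rel F') a b.
        case: (conn_split ab cpq) => [h1|[[h1 h2]|[h1 h2]]].
        - by rewrite h1 in ncpq.
        - apply: (@connect_trans _ _ p); first by rewrite csym; apply: cmono m h1.
          apply: connect_trans epq _; by rewrite csym; apply: cmono m h2.
        - apply: (@connect_trans _ _ q); first by apply: cmono m h2.
          apply: (@connect_trans _ _ p); first by rewrite csym.
          by apply: cmono m h1.
      by case: (set2_eq ab E) => [[-> ->]|[-> ->]]; last rewrite csym.
    by apply: connect1; apply/andP; split => //; rewrite !inE ne xyF.
have wF := weightD1 dsym ab abF.
have wF' : weight delta F' = Rplus (delta p q) (weight delta (F :\ e)).
  rewrite (weightD1 dsym pq (_ : [set p; q] \in F')); last by rewrite !inE eqxx orbT.
  congr Rplus; congr weight; apply/setP => x; rewrite !inE.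
  case: (eqVneq x [set p; q]) => [->|] //=; rewrite ?orbF //.
  by rewrite (negbTE pqF) andbF.
have := minF F' sp; rewrite wF wF'; fold e; lra.
Qed.

Lemma F2 : two_sets F.
Proof.
case: msf => [[subF _] _] e eF.
have [u [v [uv -> _ _]]] := sdgP (subsetP subF e eF).
by exists u, v.
Qed.

Lemma endpt (S : {set {set V}}) t x e : S \subset F -> (forall e, e \in S -> Rle t (weight delta [set e])) ->
  e \in S -> x \in e -> Rle t (r x).
Proof.
case: msf => [[subF _] _] sS ht eS xe.
have [u [v [uv ee h1 h2]]] := sdgP (subsetP subF e (subsetP sS e eS)).
have := ht e eS; rewrite ee weight1 // => h.
move: xe; rewrite ee !inE => /orP[/eqP->|/eqP->]; lra.
Qed.

Lemma dist (S : {set {set V}}) t x y e1 e2 : S \subset F ->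
  (forall e, e \in S -> Rle t (weight delta [set e])) ->
  e1 \in S -> x \in e1 -> e2 \in S -> y \in e2 -> x != y ->
  ~~ connect (edge_rel (F :\: S)) x y -> Rle t (delta x y).
Proof.
move=> sS ht e1S xe1 e2S ye2 xy nc.
have rx := endpt sS ht e1S xe1.
have ry := endpt sS ht e2S ye2.
case: (msf) => [[subF [acF span]] _].
destruct (Rle_dec t (delta x y)) as [h|h]; first done.
apply Rnot_le_lt in h; exfalso.
have xyS : [set x; y] \in SDG delta r by apply: sdg_in => //; lra.
have cxy : connect (edge_rel F) x y.
  by rewrite span; apply: connect1; apply: er_edge.
have [e eS ne] := sep_edge acF F2 sS cxy nc.
have [a [b [ab ee]]] := F2 (subsetP sS e eS).
subst e.
have := exch ab (subsetP sS _ eS) xy xyS cxy ne.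
have := ht _ eS; rewrite weight1 //; lra.
Qed.

Lemma count_bound (S : {set {set V}}) t (H : seq V) : perm_eq H (enum V) ->
  (forall u v w, Rle (delta u w) (Rplus (delta u v) (delta v w))) ->
  (forall u v, Rle 0 (delta u v)) ->
  S \subset F -> S != set0 ->
  (forall e, e \in S -> Rle t (weight delta [set e])) ->
  Rle (Rmult (INR #|S|) t) (path_weight delta H) /\ (#|S|.+1 <= #|V|)%N.
Proof.
move=> pH dtri dpos sS S0 ht.
case: (msf) => [[subF [acF span]] _].
have [P [cP ptP sepP]] := pts acF F2 sS S0.
split; last by rewrite -cP max_card.
have := ham_lower dpos dtri pH (t := t) (P := P).
rewrite cP /=; apply => u v uP vP uv.
have [e1 e1S ue1] := ptP u uP.
have [e2 e2S ve2] := ptP v vP.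
exact: dist sS ht e1S ue1 e2S ve2 uv (sepP u v uP vP uv).
Qed.

End M.

Local Open Scope R_scope.

Lemma ln_le_sub1 x : Rlt 0 x -> Rle (ln x) (Rminus x 1).
Proof. move=> hx; have := exp_ineq1_le (ln x); rewrite exp_ln //; lra. Qed.

Lemma ln_step a : Rle 1 a -> Rle 1 (Rmult (Rplus a 1) (Rminus (ln (Rplus a 1)) (ln a))).
Proof.
move=> ha.
set y := Rdiv a (Rplus a 1).
have hy : Rmult (Rplus a 1) y = a by rewrite /y; field; lra.
have ypos : Rlt 0 y by rewrite /y; apply: Rdiv_lt_0_compat; lra.
have hl : ln a = Rplus (ln (Rplus a 1)) (ln y).
  by rewrite -ln_mult ?hy //; lra.
have := ln_le_sub1 ypos.
rewrite hl => hly.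
have : Rle (Rmult (Rplus a 1) (Rminus 1 y)) (Rmult (Rplus a 1) (Rminus (ln (Rplus a 1)) (Rplus (ln (Rplus a 1)) (ln y)))).
  apply: Rmult_le_compat_l; lra.
have : Rmult (Rplus a 1) (Rminus 1 y) = 1 by rewrite /y; field; lra.
lra.
Qed.

Lemma step_ineq a c l L W : Rle 1 a -> Rlt 0 c -> Rle c (1/4) -> Rle 0 l -> Rle 0 L ->
  Rle (Rmult l a) L -> Rle W (Rdiv (Rmult L (ln a)) c) ->
  Rle (Rplus l W) (Rdiv (Rmult L (ln (Rplus a 1))) c).
Proof.
move=> ha hc hc4 hl hL hla hW.
have hd := ln_step ha.
set d := Rminus (ln (Rplus a 1)) (ln a) in hd.
have dpos : Rle 0 d.
  destruct (Rle_dec 0 d) as [h|h] => //; exfalso; nra.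
have h1 : Rle l (Rmult 2 (Rmult L d)) by nra.
have h2 : Rle (Rmult l c) (Rmult L d) by nra.
have e : Rdiv (Rmult L (ln (Rplus a 1))) c = Rplus (Rdiv (Rmult L (ln a)) c) (Rdiv (Rmult L d) c).
  rewrite /d; field; lra.
rewrite e.
have : Rle l (Rdiv (Rmult L d) c).
  apply: (Rmult_le_reg_r c) => //; rewrite /Rdiv Rmult_assoc Rinv_l; lra.
lra.
Qed.

Lemma seq_min (T : eqType) (f : T -> R) (s : seq T) : s <> [::] ->
  exists2 x, x \in s & forall y, y \in s -> f x <= f y.
Proof.
elim: s => [//|z s IH] _.
case: s IH => [|w s] IH.
  by exists z; rewrite ?inE ?eqxx // => y; rewrite inE => /eqP->; lra.
have ne : w :: s <> [::] by [].
have [x xs hx] := IH ne.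
destruct (Rle_dec (f z) (f x)) as [h|h].
  exists z; first by rewrite inE eqxx.
  move=> y; rewrite inE => /orP[/eqP->|ys]; first lra.
  by apply: Rle_trans h (hx y ys).
exists x; first by rewrite inE xs orbT.
move=> y; rewrite inE => /orP[/eqP->|ys]; first lra.
exact: hx.
Qed.

Lemma set_min (T : finType) (f : T -> R) (A : {set T}) : A != set0 ->
  exists2 x, x \in A & forall y, y \in A -> f x <= f y.
Proof.
move=> A0.
have ne : enum A <> [::].
  case: (set_0Vmem A) => [E|[x xA] e]; first by rewrite E eqxx in A0.
  by have := mem_enum A x; rewrite e xA.
have [x xs hx] := seq_min f ne.
exists x; first by rewrite -mem_enum.
by move=> y yA; apply: hx; rewrite mem_enum.
Qed.

Section Main.
Variable V : finType.
Variable delta : V -> V -> R.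
Variable r : V -> R.
Variable F : {set {set V}}.
Variable H : seq V.
Hypothesis met : is_metric delta.
Hypothesis msf : min_spanning_forest delta F (SDG delta r).
Hypothesis pH : perm_eq H (enum V).

Let c := ln (IZR 5 / IZR 4).
Let L := path_weight delta H.

Lemma c_pos : 0 < c.
Proof.
rewrite /c -ln_1; apply: ln_increasing; lra.
Qed.

Lemma c_le : c <= 1/4.
Proof. have := ln_le_sub1 (_ : 0 < IZR 5 / IZR 4); rewrite /c; lra. Qed.

Lemma L_pos : 0 <= L.
Proof.
case: met => dpos _.
rewrite /L; case: H => [|x s] /=; first lra.
elim: s x => [|y s IH] x /=; first lra.
have := IH y; have := dpos x y; lra.
Qed.

Lemma sum_bound m : forall E : {set {set V}}, E \subset F -> #|E| = m ->
  weight delta E <= L * ln (INR m.+1) / c.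
Proof.
case: met => dpos [_ [dsym dtri]].
have cp := c_pos; have cl := c_le; have Lp := L_pos.
elim: m => [|m IH] E sE cE.
  move/cards0_eq: cE => ->; rewrite weight0 ln_1 /=; rewrite Rmult_0_r /Rdiv Rmult_0_l; lra.
have E0 : E != set0 by apply/eqP => E0; rewrite E0 cards0 in cE.
have [e eE emin] := set_min (fun e => weight delta [set e]) E0.
have [a [b [ab ee]]] := F2 msf (subsetP sE e eE).
subst e.
have [cb _] := count_bound dsym msf pH dtri dpos sE E0 emin.
rewrite cE in cb.
have ce' : #|E :\ [set a; b]| = m by move: cE; rewrite (cardsD1 [set a; b]) eE add1n => [[]].
have sE' : E :\ [set a; b] \subset F by apply: subset_trans sE; apply: subD1set.
have ih := IH _ sE' ce'.
rewrite (weightD1 dsym ab eE).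
rewrite weight1 // in cb.
rewrite [INR m.+2]S_INR.
apply: step_ineq => //.
all: try (rewrite S_INR; have := pos_INR m; lra).
all: try exact: dpos.
all: by rewrite Rmult_comm.
Qed.

Lemma ln_le x y : 0 < x -> x <= y -> ln x <= ln y.
Proof.
move=> hx hxy; destruct (Rle_lt_or_eq_dec x y hxy) as [h|h].
  by apply: Rlt_le; apply: ln_increasing.
by rewrite h; lra.
Qed.

Lemma final : Rle (weight delta F)
  (Rmult (Rdiv (ln (INR #|V|)) (ln (Rdiv (IZR 5) (IZR 4)))) (path_weight delta H)).
Proof.
case: (met) => dpos [_ [dsym dtri]].
have cp := c_pos; have Lp := L_pos.
have sb := sum_bound (subxx F) (erefl #|F|).
fold c L.
case: (posnP #|V|) => [n0|npos].
  have : size H = 0%N by rewrite (perm_size pH) -cardT n0.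
  move/size0nil => H0.
  have L0 : L = 0 by rewrite /L H0.
  rewrite L0 in sb *; rewrite Rmult_0_r; move: sb; rewrite Rmult_0_l /Rdiv Rmult_0_l; lra.
have hcard : (#|F|.+1 <= #|V|)%N.
  case: (boolP (F == set0)) => [/eqP->|F0]; first by rewrite cards0.
  have ht : forall e, e \in F -> 0 <= weight delta [set e].
    move=> e eF; have [a [b [ab ->]]] := F2 msf eF.
    by rewrite weight1.
  by case: (count_bound dsym msf pH dtri dpos (subxx F) F0 ht).
have hln : ln (INR #|F|.+1) <= ln (INR #|V|).
  apply: ln_le; first by apply: lt_0_INR; apply/ltP.
  by apply: le_INR; apply/leP.
apply: Rle_trans sb _.
rewrite /Rdiv Rmult_assoc [X in X <= _]Rmult_comm Rmult_assoc.
rewrite [X in _ <= X]Rmult_assoc; apply: Rmult_le_compat_r => //.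
apply: Rmult_le_pos => //; by apply: Rlt_le; apply: Rinv_0_lt_compat.
Qed.

End Main.

Close Scope R_scope.

Theorem lemma2 (V : finType) (delta : V -> V -> R) (r : V -> R)
  (F : {set {set V}}) (H : seq V) :
  is_metric delta ->
  distinct_distances delta ->
  (forall v, Rlt R0 (r v)) ->
  min_spanning_forest delta F (SDG delta r) ->
  min_hamiltonian_path delta H ->
  Rle (weight delta F)
      (Rmult (Rdiv (ln (INR #|V|)) (ln (Rdiv (IZR 5) (IZR 4)))) (path_weight delta H)).
Proof.
move=> met _ _ msf [pH _].
exact: final met msf pH.
Qed.
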